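(* For every $\pi\in S_n$, $\mathrm{inv}(\pi)\equiv\mathrm{inv}(dp(\pi))\pmod 2$.
   Context: $S_n$ is the symmetric group on $[n]$, $\mathrm{inv}(\pi)=\#\{(i,j):i<j,\pi_i>\pi_j\}$ (with $\mathrm{inv}$ of the empty word equal to $0$). For a word $w$ of distinct positive integers $a_1<\dots<a_m$, its reduction is obtained by replacing each $a_j$ by $j$. The derangement part $dp(\pi)$ is the reduction of the subword of $\pi$ consisting of the letters $\pi_i$ with $\pi_i\ne i$. *)

(* Defs.v *)
From mathcomp Require Import all_boot all_order all_fingroup.
Set Implicit Arguments. Unset Strict Implicit. Unset Printing Implicit Defensive.

Definition inv_word (w : seq nat) : nat :=
  \sum_(i < size w) \sum_(j < size w | i < j) (nth 0 w j < nth 0 w i).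

(* reduction of a word of distinct letters a_1 < ... < a_m:
   each letter a_j is replaced by j, i.e. by the number of letters <= it *)
Definition reduction (w : seq nat) : seq nat :=
  [seq count (fun b => b <= a) w | a <- w].

(* one-line notation of pi in S_n, written on [n] = {1,..,n}:
   position i+1 carries the letter (pi i)+1 *)
Definition oneline n (pi : 'S_n) : seq nat :=
  [seq (pi i).+1 | i <- enum 'I_n].

Definition inv_perm n (pi : 'S_n) : nat := inv_word (oneline pi).

Definition dp n (pi : 'S_n) : seq nat :=
  reduction [seq (pi i).+1 | i <- enum 'I_n & pi i != i].

(* Main.v *)
Require Import Defs.
From mathcomp Require Import all_boot all_order all_fingroup zify.
Set Implicit Arguments. Unset Strict Implicit. Unset Printing Implicit Defensive.

Fixpoint invr (w : seq nat) : nat :=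
  if w is x :: s then \sum_(y <- s) (y < x) + invr s else 0.

Lemma inv_word_nat (w : seq nat) : inv_word w =
  \sum_(0 <= i < size w) \sum_(0 <= j < size w | i < j) (nth 0 w j < nth 0 w i).
Proof.
rewrite /inv_word big_mkord; apply: eq_bigr => i _.
by rewrite big_mkord.
Qed.

Lemma inv_word_invr (w : seq nat) : inv_word w = invr w.
Proof.
rewrite inv_word_nat; elim: w => [|x s IH] /=; first by rewrite big_geq.
rewrite big_nat_recl // -IH; congr (_ + _).
  rewrite big_mkcond big_nat_recl //= add0n [RHS](big_nth 0) big_mkcond /=.
  by apply: eq_bigr.
apply: eq_bigr => i _; rewrite big_mkcond big_nat_recl //= add0n [RHS]big_mkcond.
by apply: eq_bigr.
Qed.

Lemma inv_word_reduction (w : seq nat) : inv_word (reduction w) = inv_word w.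
Proof.
rewrite !inv_word_nat /reduction size_map.
apply: eq_big_nat => i /andP[_ Hi]; apply: congr_big_nat => // j /andP[_ /andP[_ Hj]].
rewrite !(nth_map 0) //.
set a := nth 0 w j; set b := nth 0 w i.
have bin : b \in w by apply: mem_nth.
case: (ltnP a b) => Hab.
  rewrite -[count (leq^~ a) w]addn0.
  have -> : count (leq^~ b) w = count (leq^~ a) w + count (fun c => a < c <= b) w.
    elim: (w) => [|c t IHt] //=; rewrite IHt.
    case: (leqP c a) => Hc /=.
      by rewrite (leq_trans Hc (ltnW Hab)) /=; rewrite addnA.
    by rewrite add0n addnCA.
  have : 0 < count (fun c => a < c <= b) w.
    rewrite -has_count; apply/hasP; exists b => //; by rewrite Hab leqnn.
  lia.
suff H : count (leq^~ b) w <= count (leq^~ a) w by rewrite ltnNge H.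
apply: sub_count => c /= Hc; exact: leq_trans Hc Hab.
Qed.
Lemma invr_sorted n (g : 'I_n -> nat) (s : seq 'I_n) :
  sorted (fun x y : 'I_n => x < y) s ->
  invr (map g s) = \sum_(x <- s) \sum_(y <- s | x < y) (g y < g x).
Proof.
elim: s => [|x s IH] /=; first by rewrite big_nil.
move=> Hp.
have Hall : all (fun y : 'I_n => x < y) s.
  by apply: order_path_min Hp => a b c; apply: ltn_trans.
rewrite IH; last exact: path_sorted Hp.
rewrite [in RHS]big_cons; congr (_ + _).
  by rewrite big_map big_cons ltnn -[RHS]big_filter (all_filterP Hall).
rewrite big_seq [RHS]big_seq; apply: eq_bigr => y Hy.
rewrite big_cons.
have : x < y by move/allP: Hall => /(_ y Hy).
by move=> Hxy; rewrite ltnNge (ltnW Hxy).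
Qed.
Section S.
Variables (n : nat) (pi : 'S_n).
Let e (i j : 'I_n) : nat := (i < j) && (pi j < pi i).

Lemma fixed_bal (f : 'I_n) : pi f = f -> \sum_i e i f = \sum_j e f j.
Proof.
move=> Hf.
have A1 : \sum_(i : 'I_n) ((i : nat) < f) = \sum_(i : 'I_n) (((i:nat) < f) && (pi i < f)) + \sum_i e i f.
  rewrite -big_split; apply: eq_bigr => i _; rewrite /e.
  case: (ltngtP i f) => Hif //=.
  have Hne : pi i != f.
    apply/eqP => H; move: Hif; rewrite -Hf in H; rewrite (perm_inj H) ltnn //.
  rewrite Hf; case: (ltngtP (pi i) f) => // H; by move/eqP: Hne; case; apply: val_inj.
have A2 : \sum_(i : 'I_n) (pi i < f) = \sum_(i : 'I_n) (((i:nat) < f) && (pi i < f)) + \sum_j e f j.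
  rewrite -big_split; apply: eq_bigr => i _; rewrite /e Hf.
  case: (ltngtP i f) => Hif //=.
  by rewrite addn0.
  have -> : i = f by apply: val_inj.
  by rewrite Hf ltnn.
have A3 : \sum_(i : 'I_n) (pi i < f) = \sum_(i : 'I_n) ((i : nat) < f).
  by rewrite [RHS](reindex_inj (@perm_inj _ pi)).
lia.
Qed.
End S.

Lemma count_fin n (pi : 'S_n) :
  odd (\sum_(i : 'I_n) \sum_(j : 'I_n | i < j) (pi j < pi i)) =
  odd (\sum_(i : 'I_n | pi i != i) \sum_(j : 'I_n | (pi j != j) && (i < j)) (pi j < pi i)).
Proof.
set P := fun i : 'I_n => pi i != i.
pose e (i j : 'I_n) : nat := (i < j) && (pi j < pi i).
have ET : \sum_(i : 'I_n) \sum_(j : 'I_n | i < j) (pi j < pi i) = \sum_i \sum_j e i j.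
  apply: eq_bigr => i _; rewrite big_mkcond; apply: eq_bigr => j _; rewrite /e.
  by case: (i < j).
have ED : \sum_(i : 'I_n | P i) \sum_(j : 'I_n | P j && (i < j)) (pi j < pi i) =
          \sum_(i | P i) \sum_(j | P j) e i j.
  apply: eq_bigr => i _; rewrite [RHS]big_mkcond [LHS]big_mkcond; apply: eq_bigr => j _; rewrite /e.
  by case: (P j); case: (i < j).
rewrite ET ED (bigID P) /=.
have -> : \sum_(i | P i) \sum_j e i j =
   \sum_(i | P i) \sum_(j | P j) e i j + \sum_(i | P i) \sum_(j | ~~ P j) e i j.
  by rewrite -big_split; apply: eq_bigr => i _; rewrite (bigID P).
rewrite [X in _ + X + _]exchange_big /=.
have -> : \sum_(j | ~~ P j) \sum_(i | P i) e i j = \sum_(j | ~~ P j) \sum_i e i j.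
  apply: eq_bigr => j Hj; rewrite [RHS](bigID P) /= [X in _ = _ + X]big1 ?addn0 //.
  move=> i Hi; move: Hi Hj; rewrite /P /e !negbK => /eqP -> /eqP ->.
  by case: (ltngtP i j).
have -> : \sum_(j | ~~ P j) \sum_i e i j = \sum_(j | ~~ P j) \sum_i e j i.
  apply: eq_bigr => j; rewrite negbK => /eqP; exact: fixed_bal.
rewrite -addnA -big_split /=.
have -> : \sum_(i | ~~ P i) (\sum_i0 e i i0 + \sum_i0 e i i0) =
   (\sum_(i | ~~ P i) \sum_i0 e i i0) + (\sum_(i | ~~ P i) \sum_i0 e i i0).
  by rewrite big_split.
by rewrite oddD addnn odd_double addbF.
Qed.

Lemma enum_sorted n : sorted (fun x y : 'I_n => x < y) (enum 'I_n).
Proof. by have := iota_ltn_sorted 0 n; rewrite -val_enum_ord sorted_map. Qed.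

Theorem mainTheorem6 (n : nat) (pi : 'S_n) :
  odd (inv_perm pi) = odd (inv_word (dp pi)).
Proof.
rewrite /inv_perm /dp inv_word_reduction !inv_word_invr /oneline.
rewrite (invr_sorted (fun i => (pi i).+1) (enum_sorted n)).
rewrite (invr_sorted (fun i => (pi i).+1) (sorted_filter _ _ (enum_sorted n))); last first.
  by move=> a b c; apply: ltn_trans.
rewrite big_filter.
have L1 : forall (P : pred 'I_n) (F : 'I_n -> nat),
    \sum_(i <- enum 'I_n | P i) F i = \sum_(i | P i) F i.
  by move=> P F; rewrite big_enum_cond; apply: eq_bigl => i; by [].
have L0 : forall (F : 'I_n -> nat), \sum_(i <- enum 'I_n) F i = \sum_i F i.
  by move=> F; rewrite big_enum; apply: eq_bigl => i; by [].
rewrite L0 L1.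
transitivity (odd (\sum_(i : 'I_n) \sum_(j : 'I_n | i < j) (pi j < pi i))).
  by congr (odd _); apply: eq_bigr => i _; rewrite L1; apply: eq_bigr => j _; rewrite ltnS.
rewrite count_fin; congr (odd _); apply: eq_bigr => i _.
by rewrite big_filter_cond L1; apply: eq_bigr => j _; rewrite ltnS.
Qed.
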